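(* Let $(K,\mathrm{val})$ be a $2$-henselian valued field whose residue class field $F$ has characteristic $\neq2$, let $A$ be a subring with $B\subseteq A\subseteq K$, $H=\mathrm{val}(A^\times)$, and let $\mathcal M,\mathcal N$ be quasi-quadratic modules in $A$. Write $M_g=M_g^A(\mathcal M)$ and $N_g=M_g^A(\mathcal N)$. Then (1) $\displaystyle \mathcal M+\mathcal N=\bigcup_{g\in H\cup G_{\ge e}}\Phi^A(M_g+N_g,[\![g]\!])\ \cup\ \bigcup_{l\in L}\Phi^A(F,[\![l]\!])$, where $L=\{l\in H\cup G_{\ge e}:\ l\ge g$ for some $g\in H\cup G_{\ge e}$ with $M_g+N_g=F\}$; (2) $\displaystyle \mathcal M\cap\mathcal N=\bigcup_{g\in H\cup G_{\ge e}}\Phi^A(M_g\cap N_g,[\![g]\!])$.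
   Context: Let $(G,\le)$ be a totally ordered abelian group written multiplicatively with identity $e$; $G_{\ge e}=\{g\in G:g\ge e\}$, $G^2=\{g^2:g\in G\}$. Let $(K,\mathrm{val})$ be a valued field with surjective valuation $\mathrm{val}:K\to G\cup\{\infty\}$, valuation ring $B=\{x:\mathrm{val}(x)\ge e\}$, residue map $\pi:B\to F$, residue field $F$. A strict unit is $x\in B^\times$ with $\pi(x)=1$; when $\mathrm{char}F\ne2$, $2$-henselian is equivalent to every strict unit being a square in $K$. For a subring $A$ with $B\subseteq A\subseteq K$ put $H=\mathrm{val}(A^\times)$; $H$ is a convex subgroup of $G$ and $\mathrm{val}(A\setminus\{0\})=H\cup G_{\ge e}$. For $g\in G$: $\overline g$ is its class in $G/G^2$, $[\![g]\!]$ its class in $G/H^2$; ''$\mathrm{val}(x)=\overline g$'' means $\overline{\mathrm{val}(x)}=\overline g$, similarly for $[\![\cdot]\!]$. A quasi-quadratic module in a commutative ring $R$ is a subset $M\subseteq R$ with $M+M\subseteq M$ and $a^2M\subseteq M$ for all $a\in R$. A pseudo-angular component map is a map $\mathrm{p.an}:K^\times\to F^\times$ such that: (1) $\mathrm{p.an}(u)=\pi(u)$ for $u\in B^\times$; (2) $\mathrm{p.an}(ux)=\pi(u)\mathrm{p.an}(x)$ for $u\in B^\times,x\in K^\times$; (3) for all $g\in G$, $c\in F^\times$ there is $w\in K$ with $\mathrm{val}(w)=g$, $\mathrm{p.an}(w)=c$; (4) for nonzero $x_1,x_2$ with $x_1+x_2\ne0$: if $\mathrm{val}(x_1)<\mathrm{val}(x_2)$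 then $\mathrm{p.an}(x_1+x_2)=\mathrm{p.an}(x_1)$; if $\mathrm{val}(x_1)=\mathrm{val}(x_2)$ and $\mathrm{p.an}(x_1)+\mathrm{p.an}(x_2)\ne0$ then $\mathrm{val}(x_1+x_2)=\mathrm{val}(x_1)$ and $\mathrm{p.an}(x_1+x_2)=\mathrm{p.an}(x_1)+\mathrm{p.an}(x_2)$; (5) if $x,y\in K^\times$, $\overline{\mathrm{val}(x)}=\overline{\mathrm{val}(y)}$ and $\mathrm{p.an}(x)=\mathrm{p.an}(y)$ then $y=u^2x$ for some $u\in K^\times$; (6) for $a,u\in K^\times$ there is $k\in F^\times$ with $\mathrm{p.an}(au^2)=\mathrm{p.an}(a)k^2$. Such a map exists under the hypotheses; fix one. For $g\in G$ and a quasi-quadratic module $M$ in $F$: $$\Phi^A(M,[\![g]\!])=\{x\in A\setminus\{0\}:\ \mathrm{val}(x)=\overline g,\ (\mathrm{val}(x)=[\![g]\!]\ \text{or}\ \mathrm{val}(x)>g),\ \mathrm{p.an}(x)\in M\}\cup\{0\}.$$ For a quasi-quadratic module $\mathcal M$ in $A$ and $g\in G$: $M_g^A(\mathcal M)=\{\mathrm{p.an}(x):x\in\mathcal M\setminus\{0\},\ \mathrm{val}(x)=g\}\cup\{0\}$. *)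

(* Defs.v *)
From HB Require Import structures.
From mathcomp Require Import all_boot all_order all_algebra.
Set Implicit Arguments. Unset Strict Implicit. Unset Printing Implicit Defensive.
Import GRing.Theory.
Local Open Scope ring_scope.

Record ordAbGroup := OrdAbGroup {
  og_car :> Type;
  og_mul : og_car -> og_car -> og_car;
  og_one : og_car;
  og_inv : og_car -> og_car;
  og_le : og_car -> og_car -> Prop;
  og_mulA : forall x y z, og_mul x (og_mul y z) = og_mul (og_mul x y) z;
  og_mulC : forall x y, og_mul x y = og_mul y x;
  og_mul1 : forall x, og_mul og_one x = x;
  og_mulV : forall x, og_mul (og_inv x) x = og_one;
  og_le_refl : forall x, og_le x x;
  og_le_anti : forall x y, og_le x y -> og_le y x -> x = y;
  og_le_trans : forall x y z, og_le x y -> og_le y z -> og_le x z;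
  og_le_total : forall x y, og_le x y \/ og_le y x;
  og_le_mul : forall x y z, og_le x y -> og_le (og_mul x z) (og_mul y z)
}.

Section Defs.
Variable G : ordAbGroup.

Definition og_lt (x y : G) : Prop := og_le x y /\ x <> y.

(* G ∪ {∞}, with None = ∞ the top element. *)
Definition vle (a b : option G) : Prop :=
  match b with
  | None => True
  | Some y => match a with None => False | Some x => og_le x y end
  end.
Definition vlt (a b : option G) : Prop := vle a b /\ a <> b.
Definition vmul (a b : option G) : option G :=
  match a, b with Some x, Some y => Some (og_mul x y) | _, _ => None end.

Definition cls2 (g h : G) : Prop := exists k : G, h = og_mul g (og_mul k k).

Variables (K F : fieldType) (val : K -> option G) (pi : K -> F).

Definition is_surj_valuation : Prop :=
  (forall x, val x = None <-> x = 0) /\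
  (forall x y, val (x * y) = vmul (val x) (val y)) /\
  (forall x y h, vle h (val x) -> vle h (val y) -> vle h (val (x + y))) /\
  (forall g : G, exists x, val x = Some g).

Definition inB (x : K) : Prop := vle (Some (og_one G)) (val x).
Definition inBunit (x : K) : Prop := x != 0 /\ inB x /\ inB x^-1.

Definition is_residue_map : Prop :=
  (forall x y, inB x -> inB y -> pi (x + y) = pi x + pi y) /\
  (forall x y, inB x -> inB y -> pi (x * y) = pi x * pi y) /\
  pi 1 = 1 /\
  (forall c : F, exists x, inB x /\ pi x = c) /\
  (forall x, inB x -> (pi x = 0 <-> vlt (Some (og_one G)) (val x))).

Definition strict_unit (x : K) : Prop := inBunit x /\ pi x = 1.

Definition two_henselian : Prop :=
  forall x, strict_unit x -> exists y, x = y * y.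

Definition is_overring (A : K -> Prop) : Prop :=
  A 0 /\ A 1 /\ (forall x y, A x -> A y -> A (x + y)) /\
  (forall x, A x -> A (- x)) /\ (forall x y, A x -> A y -> A (x * y)) /\
  (forall x, inB x -> A x).

Definition Hgrp (A : K -> Prop) (g : G) : Prop :=
  exists x, A x /\ x != 0 /\ A x^-1 /\ val x = Some g.

Definition clsH (A : K -> Prop) (g h : G) : Prop :=
  exists k, Hgrp A k /\ h = og_mul g (og_mul k k).

Definition idxset (A : K -> Prop) (g : G) : Prop := Hgrp A g \/ og_le (og_one G) g.

Variable pan : K -> F.

Definition is_pseudo_angular : Prop :=
  (forall x, x != 0 -> pan x != 0) /\
  (forall u, inBunit u -> pan u = pi u) /\
  (forall u x, inBunit u -> x != 0 -> pan (u * x) = pi u * pan x) /\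
  (forall (g : G) (c : F), c != 0 -> exists w, val w = Some g /\ pan w = c) /\
  (forall x1 x2, x1 != 0 -> x2 != 0 -> x1 + x2 != 0 ->
     vlt (val x1) (val x2) -> pan (x1 + x2) = pan x1) /\
  (forall x1 x2, x1 != 0 -> x2 != 0 -> x1 + x2 != 0 ->
     val x1 = val x2 -> pan x1 + pan x2 != 0 ->
     val (x1 + x2) = val x1 /\ pan (x1 + x2) = pan x1 + pan x2) /\
  (forall x y, x != 0 -> y != 0 ->
     (exists gx gy, val x = Some gx /\ val y = Some gy /\ cls2 gx gy) ->
     pan x = pan y -> exists u, u != 0 /\ y = u ^+ 2 * x) /\
  (forall a u, a != 0 -> u != 0 ->
     exists k, k != 0 /\ pan (a * u ^+ 2) = pan a * k ^+ 2).

Definition Phi (A : K -> Prop) (M : F -> Prop) (g : G) (x : K) : Prop :=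
  x = 0 \/
  (A x /\ x != 0 /\ exists h, val x = Some h /\ cls2 g h /\
     (clsH A g h \/ og_lt g h) /\ M (pan x)).

Definition Mg (Mm : K -> Prop) (g : G) (c : F) : Prop :=
  c = 0 \/ exists x, Mm x /\ x != 0 /\ val x = Some g /\ pan x = c.

End Defs.

Definition qq_module (R : nzRingType) (A M : R -> Prop) : Prop :=
  (forall x, M x -> A x) /\ M 0 /\
  (forall x y, M x -> M y -> M (x + y)) /\
  (forall a x, A a -> M x -> M (a * a * x)).

Definition sumset (R : zmodType) (S T : R -> Prop) (c : R) : Prop :=
  exists a b, S a /\ T b /\ c = a + b.

(* Main.v *)
Require Import Defs.
From mathcomp Require Import all_boot all_order all_algebra.
From mathcomp Require Import ring.
From Stdlib Require Import Classical.
Import GRing.Theory.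
Local Open Scope ring_scope.
Section Grp.
Variable G : ordAbGroup.
Local Notation e := (og_one G).

Lemma gmul1r (x : G) : og_mul e x = x. Proof. exact: og_mul1. Qed.
Lemma gmulr1 (x : G) : og_mul x e = x. Proof. by rewrite og_mulC og_mul1. Qed.
Lemma gmulV' (x : G) : og_mul x (og_inv x) = e. Proof. by rewrite og_mulC og_mulV. Qed.
Lemma gcancel (x y z : G) : og_mul x z = og_mul y z -> x = y.
Proof.
move=> h. have := congr1 (fun t => og_mul t (og_inv z)) h => /=.
by rewrite -!og_mulA gmulV' !gmulr1.
Qed.
Lemma gcancell (x y z : G) : og_mul z x = og_mul z y -> x = y.
Proof. by rewrite (og_mulC z x) (og_mulC z y); apply: gcancel. Qed.
Lemma gle2 (x y z w : G) : og_le x y -> og_le z w -> og_le (og_mul x z) (og_mul y w).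
Proof.
move=> h1 h2. apply: (og_le_trans (og_le_mul z h1)).
rewrite (og_mulC y z) (og_mulC y w). exact: og_le_mul.
Qed.
Lemma gsq_inj (x y : G) : og_mul x x = og_mul y y -> x = y.
Proof.
move=> h. case: (og_le_total x y) => hxy.
- have h1 : og_le (og_mul x x) (og_mul x y).
    by rewrite (og_mulC x y); apply: og_le_mul.
  have h2 : og_le (og_mul x y) (og_mul y y) by apply: og_le_mul.
  rewrite h in h1. have := og_le_anti h2 h1. by rewrite -h => /gcancell.
- have h1 : og_le (og_mul y y) (og_mul y x).
    by rewrite (og_mulC y x); apply: og_le_mul.
  have h2 : og_le (og_mul y x) (og_mul x x) by apply: og_le_mul.
  rewrite -h in h1. have := og_le_anti h2 h1. by rewrite h => /gcancell ->.
Qed.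
Lemma gsq_pos (v g : G) : og_lt g (og_mul (og_mul v v) g) -> og_le e v.
Proof.
case=> hle hne. case: (og_le_total e v) => // hv.
have : og_le (og_mul v v) e by rewrite -(gmul1r e); apply: gle2.
move=> /(og_le_mul g); rewrite gmul1r => h.
by case: hne; apply: og_le_anti.
Qed.
Lemma gKK (l k : G) : og_mul (og_mul l (og_mul k k)) (og_mul (og_inv k) (og_inv k)) = l.
Proof.
have h : og_mul (og_mul k k) (og_mul (og_inv k) (og_inv k)) = e.
  by rewrite og_mulA -(og_mulA k k) gmulV' gmulr1 gmulV'.
by rewrite -og_mulA h gmulr1.
Qed.
End Grp.

Section V.
Variables (G : ordAbGroup) (K F : fieldType) (val : K -> option G) (pi pan : K -> F) (A : K -> Prop).
Hypothesis Hv : is_surj_valuation val.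
Hypothesis Hr : is_residue_map val pi.
Hypothesis Hp : is_pseudo_angular val pi pan.
Hypothesis HA : is_overring val A.
Local Notation e := (og_one G).

Lemma val0 x : val x = None <-> x = 0. Proof. by case: Hv => hh _; apply: hh. Qed.
Lemma valM x y : val (x * y) = vmul (val x) (val y). Proof. by case: Hv => _ [] hh _; apply: hh. Qed.
Lemma valU x y h : vle h (val x) -> vle h (val y) -> vle h (val (x + y)).
Proof. by case: Hv => _ [] _ [] hh _; apply: hh. Qed.
Lemma valnz {x} : x != 0 -> exists g, val x = Some g.
Proof.
move=> hx; case E: (val x) => [g|]; first by exists g.
by move/val0: E => /eqP; rewrite (negbTE hx).
Qed.
Lemma valS0 {x g} : val x = Some g -> x != 0.
Proof. by move=> h; apply/eqP => /val0; rewrite h. Qed.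
Lemma val1 : val 1 = Some e.
Proof.
have [o ho] := valnz (oner_neq0 K).
have := valM 1 1; rewrite mulr1 ho /= => [[]] h.
by rewrite (@gcancell G o e o) // gmulr1.
Qed.
Lemma valN1 : val (-1) = Some e.
Proof.
have [o ho] : exists o, val (-1) = Some o by apply: valnz; rewrite oppr_eq0 oner_neq0.
have := valM (-1) (-1); rewrite mulrNN mulr1 ho val1 /= => [[]] h.
by rewrite (@gsq_inj G o e) // gmulr1.
Qed.
Lemma valN x : val (- x) = val x.
Proof. by rewrite -mulN1r valM valN1; case: (val x) => //= g; rewrite og_mul1. Qed.
Lemma valV {x g} : val x = Some g -> val x^-1 = Some (og_inv g).
Proof.
move=> h; have hx := valS0 h.
have [w hw] := valnz (invr_neq0 hx).
have := valM x x^-1; rewrite mulfV // val1 h hw /= => [[]] h2.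
congr Some; apply: (@gcancell G _ _ g).
by rewrite -h2 gmulV'.
Qed.
Lemma val_lt {x y gx gy} : val x = Some gx -> val y = Some gy -> og_lt gx gy ->
  val (x + y) = Some gx.
Proof.
move=> hx hy [hle hne].
have h1 : vle (Some gx) (val (x + y)).
  by apply: valU; rewrite ?hx ?hy //=; apply: og_le_refl.
case E: (val (x + y)) => [z|]; last first.
  move/val0: E => /eqP; rewrite addr_eq0 => /eqP hxy.
  by case: hne; move: hx; rewrite hxy valN hy => [[]].
rewrite E /= in h1. congr Some; apply: og_le_anti => //.
have hxe : x = (x + y) + (- y) by rewrite addrK.
case: (og_le_total z gy) => hz.
- have : vle (Some z) (val x).
    by rewrite hxe; apply: valU; rewrite ?E ?valN ?hy //=; apply: og_le_refl.
  by rewrite hx.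
- have : vle (Some gy) (val x).
    by rewrite hxe; apply: valU; rewrite ?E ?valN ?hy //=; apply: og_le_refl.
  rewrite hx /= => h; case: hne; exact: og_le_anti.
Qed.
Lemma ov_B x : inB val x -> A x. Proof. by case: HA => _ [] _ [] _ [] _ [] _ hh; apply: hh. Qed.
Lemma ov_add x y : A x -> A y -> A (x + y). Proof. by case: HA => _ [] _ [] hh _; apply: hh. Qed.
Lemma ov_mul x y : A x -> A y -> A (x * y). Proof. by case: HA => _ [] _ [] _ [] _ [] hh _; apply: hh. Qed.
Lemma ov_0 : A 0. Proof. by case: HA. Qed.
Lemma ov_1 : A 1. Proof. by case: HA => _ [] hh _. Qed.

Lemma Aidx {x g} : A x -> val x = Some g -> idxset val A g.
Proof.
move=> hA hx; case: (og_le_total e g) => hg; first by right.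
left; exists x; split=> //; split; first exact: valS0 hx.
split=> //; apply: ov_B; rewrite /inB (valV hx) /=.
have := og_le_mul (og_inv g) hg; by rewrite gmulV' og_mul1.
Qed.
Lemma He : Hgrp val A e.
Proof. exists 1; rewrite invr1 val1; split; [exact: ov_1|split; [exact: oner_neq0|split=> //; exact: ov_1]]. Qed.
Lemma clsH_refl g : clsH val A g g.
Proof. by exists e; split; [exact: He| rewrite og_mul1 gmulr1]. Qed.
Lemma cls2_refl (g : G) : cls2 g g.
Proof. by exists e; rewrite og_mul1 gmulr1. Qed.
Lemma inv_e : og_inv e = e.
Proof. by apply: (@gcancel G _ _ e); rewrite og_mulV og_mul1. Qed.
Lemma unit_e {x} : val x = Some e -> inBunit val x.
Proof.
move=> h; split; first exact: valS0 h.
by rewrite /inB (valV h) h inv_e /=; split; apply: og_le_refl.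
Qed.

Lemma pi0 : pi 0 = 0.
Proof.
case: Hr => _ [] _ [] _ [] _ hK.
have v00 := proj2 (val0 0) erefl.
have hB : inB val 0 by rewrite /inB v00.
apply/(hK 0 hB); rewrite /vlt v00; split => //.
Qed.
Lemma inB_e {x} : val x = Some e -> inB val x.
Proof. by move=> h; rewrite /inB h /=; apply: og_le_refl. Qed.
Lemma piN1 : pi (-1) = -1.
Proof.
case: Hr => hD [] _ [] h1 _.
have := hD 1 (-1) (inB_e val1) (inB_e valN1); rewrite subrr pi0 h1 => h.
by rewrite -[pi (-1)](addKr 1) -h addr0.
Qed.
Lemma pan_nz {x} : x != 0 -> pan x != 0. Proof. by case: Hp => hh _; apply: hh. Qed.
Lemma panN {x} : x != 0 -> pan (- x) = - pan x.
Proof.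
move=> hx; case: Hp => _ [] _ [] h3 _.
by rewrite -mulN1r h3 ?piN1 ?mulN1r //; apply: unit_e; exact: valN1.
Qed.

Lemma transport {Q : K -> Prop} {y x g h} : qq_module A Q -> Q y -> y != 0 -> val y = Some g ->
  x != 0 -> val x = Some h -> cls2 g h -> (clsH val A g h \/ og_lt g h) -> pan x = pan y -> Q x.
Proof.
move=> [_ [_ [_ hQ]]] Qy y0 vy x0 vx c2 hc hpan.
case: Hp => _ [] _ [] _ [] _ [] _ [] _ [] h5 _.
have [u [u0 ex]] := h5 y x y0 x0 (ex_intro _ g (ex_intro _ h (conj vy (conj vx c2)))) (esym hpan).
subst x; have [v vu] := valnz u0.
have eh : h = og_mul (og_mul v v) g.
  by move: vx; rewrite valM expr2 valM vu vy /= => [[]].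
rewrite expr2; apply: hQ => //.
case: hc => [[k [[t [At [t0 [Ati vt]]]] ehk]]|hlt].
- have vk : v = k.
    apply: gsq_inj; apply: (@gcancel G _ _ g). by rewrite -eh ehk og_mulC.
  have -> : u = (u * t^-1) * t by rewrite -mulrA mulVf // mulr1.
  apply: ov_mul => //; apply: ov_B; apply: inB_e.
  by rewrite valM vu (valV vt) /= vk gmulV'.
- rewrite eh in hlt; apply: ov_B; rewrite /inB vu /=; exact: gsq_pos hlt.
Qed.

Lemma Mg_add (Q : K -> Prop) g c1 c2 : qq_module A Q -> Mg val pan Q g c1 -> Mg val pan Q g c2 ->
  Mg val pan Q g (c1 + c2).
Proof.
move=> [_ [_ [hD _]]] [->|[y1 [Q1 [n1 [v1 p1]]]]]; first by rewrite add0r.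
move=> [->|[y2 [Q2 [n2 [v2 p2]]]]]; first by rewrite addr0; right; exists y1.
have [/eqP ->|hs] := boolP (c1 + c2 == 0); first by left.
have ys : y1 + y2 != 0.
  apply/eqP => h; have ey : y1 = - y2 by apply/eqP; rewrite -addr_eq0 h.
  by move: hs; rewrite -p1 ey panN // p2 addNr eqxx.
case: Hp => _ [] _ [] _ [] _ [] _ [] h4 _.
have [] := h4 y1 y2 n1 n2 ys (etrans v1 (esym v2)); first by rewrite p1 p2.
move=> hv hp; right; exists (y1 + y2); split; first exact: hD.
by split=> //; rewrite hv v1 hp p1 p2.
Qed.

Lemma Mg_sq (Q : K -> Prop) g c d : qq_module A Q -> Mg val pan Q g c -> Mg val pan Q g (d * d * c).
Proof.
move=> [_ [_ [_ hQ]]] [->|[y [Qy [n [vy py]]]]]; first by left; rewrite mulr0.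
have [->|d0] := eqVneq d 0; first by left; rewrite !mul0r.
case: Hr => _ [] hM [] _ [] hS hK.
have [w [Bw pw]] := hS d.
have vw : val w = Some e.
  move: (Bw); rewrite /inB; case E: (val w) => [z|] /= hz.
  - congr Some; apply: og_le_anti => //.
    case: (classic (e = z)) => [<-|ne]; first exact: og_le_refl.
    exfalso; have [_ h2] := hK w Bw.
    have : pi w = 0 by apply: h2; rewrite E; split => //=; case.
    by rewrite pw; move/eqP; rewrite (negbTE d0).
  - exfalso; have [_ h2] := hK w Bw.
    have : pi w = 0 by apply: h2; rewrite E; split.
    by rewrite pw; move/eqP; rewrite (negbTE d0).
have vww : val (w * w) = Some e by rewrite valM vw /= og_mul1.
right; exists (w * w * y); split; first by apply: hQ => //; apply: ov_B; apply: inB_e.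
split; first by rewrite mulf_neq0 // (valS0 vww).
split; first by rewrite valM vww vy /= og_mul1.
case: Hp => _ [] _ [] h3 _.
rewrite h3; [|exact: unit_e vww|exact: valS0 vy].
by rewrite (hM w w) ?(inB_e vw) // pw py.
Qed.

Lemma Mg_mono (Q Q' : K -> Prop) g c : (forall x, Q x -> Q' x) ->
  Mg val pan Q g c -> Mg val pan Q' g c.
Proof. move=> hQ [->|[y [Qy h]]]; [by left | by right; exists y; split => //; apply: hQ]. Qed.

Lemma allF {Q1 Q2 : K -> Prop} {g c} : (2%:R : F) != 0 -> c != 0 -> qq_module A Q1 -> qq_module A Q2 ->
  Mg val pan Q1 g c -> Mg val pan Q2 g (- c) -> forall f, sumset (Mg val pan Q1 g) (Mg val pan Q2 g) f.
Proof.
move=> h2 c0 q1 q2 m1 m2 f.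
set al := (f / c + 1) / 2%:R; set be := (f / c - 1) / 2%:R.
exists (al * al * c), (be * be * (- c)); split; first exact: Mg_sq.
split; first exact: Mg_sq.
rewrite /al /be; field; by apply/andP.
Qed.

Lemma findc {Q1 Q2 : K -> Prop} {g} : qq_module A Q1 -> qq_module A Q2 ->
  (forall f, sumset (Mg val pan Q1 g) (Mg val pan Q2 g) f) ->
  exists c, c != 0 /\ (Mg val pan Q1 g c \/ Mg val pan Q2 g c) /\
     (Mg val pan Q1 g (- c) \/ Mg val pan Q2 g (- c)).
Proof.
move=> q1 q2 hF.
have [m [n [hm [hn e1]]]] := hF 1.
have [m' [n' [hm' [hn' e2]]]] := hF (-1).
have [hs|hs] := eqVneq (m + m') 0; last first.
  exists (m + m'); split => //; split; first by left; apply: Mg_add.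
  right; have -> : - (m + m') = n + n'.
    have z0 : (m + n) + (m' + n') = 0 by rewrite -e1 -e2 subrr.
    by rewrite -[LHS]addr0 -z0; ring.
  exact: Mg_add.
have em : m' = - m by apply/eqP; rewrite -addr_eq0 addrC hs.
have [m0|m0] := eqVneq m 0; last first.
  by exists m; split => //; split; left => //; rewrite -em.
exists 1; split; first exact: oner_neq0.
move: e1 e2; rewrite em m0 oppr0 !add0r => f1 f2; rewrite f2 f1; split; by right.
Qed.

Lemma phi_mk (P : F -> Prop) g x : A x -> val x = Some g -> P (pan x) -> Phi val pan A P g x.
Proof.
move=> hA hv hP; right; split => //; split; first exact: valS0 hv.
exists g; split => //; split; first exact: cls2_refl.
by split => //; left; apply: clsH_refl.
Qed.

Lemma main_sec (Mm Nm : K -> Prop) : (2%:R : F) != 0 ->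
  qq_module A Mm -> qq_module A Nm ->
  (forall x : K,
     sumset Mm Nm x <->
     ((exists g, idxset val A g /\
          Phi val pan A (sumset (Mg val pan Mm g) (Mg val pan Nm g)) g x) \/
      (exists l, idxset val A l /\
          (exists g, idxset val A g /\ og_le g l /\
             (forall c : F, sumset (Mg val pan Mm g) (Mg val pan Nm g) c)) /\
          Phi val pan A (fun _ => True) l x))) /\
  (forall x : K,
     (Mm x /\ Nm x) <->
     (exists g, idxset val A g /\
        Phi val pan A (fun c => Mg val pan Mm g c /\ Mg val pan Nm g c) g x)).
Proof.
move=> h2 qM qN.
set S := sumset Mm Nm.
have [MA [M0 [MD MQ]]] := qM.
have [NA [N0 [ND NQ]]] := qN.
have qS : qq_module A S.
  split; first by move=> x [a [b [ha [hb ->]]]]; apply: ov_add; [apply: MA|apply: NA].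
  split; first by exists 0, 0; rewrite addr0.
  split; first by move=> x y [a [b [ha [hb ->]]]] [a' [b' [ha' [hb' ->]]]];
    exists (a + a'), (b + b'); split; [exact: MD|split; [exact: ND|rewrite addrACA]].
  by move=> a x hA [m [n [hm [hn ->]]]]; exists (a * a * m), (a * a * n);
    split; [exact: MQ|split; [exact: NQ|rewrite mulrDr]].
have MS : forall x, Mm x -> S x by move=> x hx; exists x, 0; rewrite addr0.
have NS : forall x, Nm x -> S x by move=> x hx; exists 0, x; rewrite add0r.
have [SA [S0 [SD SQ]]] := qS.
have idx_e : idxset val A e by right; apply: og_le_refl.
have phi1 : forall g x, Phi val pan A (sumset (Mg val pan Mm g) (Mg val pan Nm g)) g x -> S x.
  move=> g x [->|[hA [x0 [h [vx [c2 [hc [m [n [hm [hn hpx]]]]]]]]]]] //.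
  have : Mg val pan S g (pan x).
    by rewrite hpx; apply: Mg_add => //; apply: Mg_mono hm || apply: Mg_mono hn.
  case=> [/eqP|[y [Sy [y0 [vy py]]]]]; first by rewrite (negbTE (pan_nz x0)).
  exact: (transport qS Sy y0 vy x0 vx c2 hc (esym py)).
have big : forall g, (forall c, sumset (Mg val pan Mm g) (Mg val pan Nm g) c) ->
    forall z l', val z = Some l' -> og_le g l' -> S z.
  move=> g hF z l' vz hl.
  have z0 := valS0 vz.
  case: (classic (g = l')) => [eg|ne].
    subst l'.
    have [m [n [hm [hn hpz]]]] := hF (pan z).
    have : Mg val pan S g (pan z).
      by rewrite hpz; apply: Mg_add => //; apply: Mg_mono hm || apply: Mg_mono hn.
    case=> [/eqP|[y [Sy [y0 [vy py]]]]]; first by rewrite (negbTE (pan_nz z0)).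
    exact: (transport qS Sy y0 vy z0 vz (cls2_refl _) (or_introl (clsH_refl _)) (esym py)).
  have [c [c0 [hc hnc]]] := findc qM qN hF.
  have hc' : Mg val pan S g c by case: hc => hc1; [apply: Mg_mono hc1|apply: Mg_mono hc1].
  have hnc' : Mg val pan S g (- c) by case: hnc => hc1; [apply: Mg_mono hc1|apply: Mg_mono hc1].
  case: hc' => [/eqP|[y1 [S1 [y10 [v1 p1]]]]]; first by rewrite (negbTE c0).
  case: hnc' => [/eqP|[w [Sw [w0 [vw pw]]]]]; first by rewrite oppr_eq0 (negbTE c0).
  have vN1 : val (- y1) = Some g by rewrite valN.
  have vy2 : val (- y1 + z) = Some g by apply: (val_lt vN1 vz).
  have py2 : pan (- y1 + z) = - c.
    case: Hp => _ [] _ [] _ [] _ [] h4a _.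
    rewrite h4a ?oppr_eq0 ?(valS0 vy2) ?panN ?p1 //.
    by rewrite vN1 vz; split => //= [[]].
  have S2 : S (- y1 + z).
    apply: (transport qS Sw w0 vw (valS0 vy2) vy2 (cls2_refl _) (or_introl (clsH_refl _))).
    by rewrite py2 pw.
  have -> : z = y1 + (- y1 + z) by rewrite addNKr.
  exact: SD.
split => x; split.
- move=> [a [b [ha [hb ex]]]].
  have [x0|x0] := eqVneq x 0; first by left; exists e; split => //; left.
  have Ax : A x by rewrite ex; apply: SA; exists a, b.
  have [gx vx] := valnz x0.
  have [a0|a0] := eqVneq a 0.
    left; exists gx; split; first exact: Aidx Ax vx.
    apply: phi_mk => //; exists 0, (pan x); split; first by left.
    split; last by rewrite add0r.
    right; exists x; split; last by [].
    by rewrite ex a0 add0r.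
  have [b0|b0] := eqVneq b 0.
    left; exists gx; split; first exact: Aidx Ax vx.
    apply: phi_mk => //; exists (pan x), 0; split; last by split; [left|rewrite addr0].
    right; exists x; split; last by [].
    by rewrite ex b0 addr0.
  have [ga va] := valnz a0.
  have [gb vb] := valnz b0.
  have Aa := MA _ ha. have Ab := NA _ hb.
  case: Hp => _ [] _ [] _ [] _ [] h4a [] h4b _.
  have Ma : Mg val pan Mm ga (pan a) by right; exists a.
  have Nb : Mg val pan Nm gb (pan b) by right; exists b.
  case: (classic (ga = gb)) => [egab|ne].
    subst gb.
    have [hs|hs] := eqVneq (pan a + pan b) 0.
      right; exists gx; split; first exact: Aidx Ax vx.
      split; last by apply: phi_mk.
      exists ga; split; first exact: Aidx Aa va.
      split.
        have : vle (Some ga) (val x) by rewrite ex; apply: valU; rewrite ?va ?vb //=; apply: og_le_refl.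
        by rewrite vx.
      apply: (allF h2 (pan_nz a0) qM qN Ma).
      by have -> : - pan a = pan b by apply/eqP; rewrite eq_sym -addr_eq0 addrC hs.
    have [hv hp] := h4b a b a0 b0 (ltac:(by rewrite -ex)) (etrans va (esym vb)) hs.
    left; exists ga; split; first exact: Aidx Aa va.
    rewrite ex; apply: phi_mk; [by rewrite -ex|by rewrite hv|].
    by rewrite hp; exists (pan a), (pan b).
  case: (og_le_total ga gb) => hle.
    have lt : og_lt ga gb by split.
    have vab := val_lt va vb lt.
    have pab : pan (a + b) = pan a.
      apply: h4a => //; first by rewrite -ex.
      rewrite va vb; split => // hq; apply: ne; by case: hq.
    left; exists ga; split; first exact: Aidx Aa va.
    rewrite ex; apply: phi_mk; [by rewrite -ex|exact: vab|].
    by rewrite pab; exists (pan a), 0; split => //; split; [left|rewrite addr0].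
  have lt : og_lt gb ga by split => // q; apply: ne.
  have vab := val_lt vb va lt.
  have pab : pan (b + a) = pan b.
    apply: h4a => //; first by rewrite addrC -ex.
    rewrite va vb; split => // hq; apply: ne; by case: hq => ->.
  left; exists gb; split; first exact: Aidx Ab vb.
  rewrite ex addrC; apply: phi_mk; [by rewrite addrC -ex|exact: vab|].
  by rewrite pab; exists 0, (pan b); split; [left|split => //; rewrite add0r].
- case=> [[g [_ hphi]]|[l [_ [[g [_ [hgl hF]]] hphi]]]]; first exact: phi1 hphi.
  case: hphi => [->|[hA [x0 [h [vx [c2 [hc _]]]]]]]; first exact: S0.
  case: hc => [[k [[t [At [t0 [Ati vt]]]] ehk]]|hlt]; last first.
    apply: (big g hF x h vx); apply: og_le_trans hgl _; exact: hlt.1.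
  set z := x * (t^-1 * t^-1).
  have vz : val z = Some l.
    rewrite /z !valM vx (valV vt) /= ehk; congr Some.
    by rewrite gKK.
  have -> : x = t * t * z by rewrite /z; field.
  apply: SQ => //; exact: (big g hF z l vz hgl).
- move=> [hm hn].
  have [x0|x0] := eqVneq x 0; first by exists e; split => //; left.
  have Ax := MA _ hm.
  have [gx vx] := valnz x0.
  exists gx; split; first exact: Aidx Ax vx.
  by apply: phi_mk => //; split; right; exists x.
- case=> g [_ [->|[hA [x0 [h [vx [c2 [hc [m n]]]]]]]]]; first by split.
  case: m => [/eqP|[y [My [y0 [vy py]]]]]; first by rewrite (negbTE (pan_nz x0)).
  case: n => [/eqP|[y' [Ny [y0' [vy' py']]]]]; first by rewrite (negbTE (pan_nz x0)).
  split; [exact: (transport qM My y0 vy x0 vx c2 hc (esym py))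
         |exact: (transport qN Ny y0' vy' x0 vx c2 hc (esym py'))].
Qed.
End V.

Theorem mainTheorem9 (G : ordAbGroup) (K F : fieldType)
  (val : K -> option G) (pi : K -> F) (pan : K -> F) (A Mm Nm : K -> Prop) :
  is_surj_valuation val ->
  is_residue_map val pi ->
  (2%:R : F) != 0 ->
  two_henselian val pi ->
  is_pseudo_angular val pi pan ->
  is_overring val A ->
  qq_module A Mm -> qq_module A Nm ->
  (forall x : K,
     sumset Mm Nm x <->
     ((exists g, idxset val A g /\
          Phi val pan A (sumset (Mg val pan Mm g) (Mg val pan Nm g)) g x) \/
      (exists l, idxset val A l /\
          (exists g, idxset val A g /\ og_le g l /\
             (forall c : F, sumset (Mg val pan Mm g) (Mg val pan Nm g) c)) /\
          Phi val pan A (fun _ => True) l x))) /\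
  (forall x : K,
     (Mm x /\ Nm x) <->
     (exists g, idxset val A g /\
        Phi val pan A (fun c => Mg val pan Mm g c /\ Mg val pan Nm g c) g x)).
Proof.
move=> Hv Hr H2 _ Hp HA qM qN.

exact: (@main_sec G K F val pi pan A Hv Hr Hp HA Mm Nm H2 qM qN).
Qed.
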